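(* Let $k,n$ be integers with $n>2$ and $k\geq 4$. If $c$ is an exact $k$-coloring of $\mathcal{B}_n$ with no rainbow induced copy of $\mathcal{B}_2$, then $k\leq \binom{n}{\lfloor n/2\rfloor}+\binom{n-1}{\lfloor (n-1)/2\rfloor}+\binom{n-2}{\lfloor (n-2)/2\rfloor}+1$.
   Context: $\mathcal{B}_n$ is the Boolean lattice of subsets of $[n]$ under inclusion. An exact $k$-coloring is a surjective map $c:\mathcal{B}_n\to[k]$. A rainbow induced copy of $\mathcal{B}_2$ is four sets $W_1\subsetneq W_2,W_3\subsetneq W_4$ with $W_2,W_3$ incomparable and pairwise distinct colors. *)

(* Defs.v *)
From mathcomp Require Import all_boot.
Set Implicit Arguments. Unset Strict Implicit. Unset Printing Implicit Defensive.

(* B_n = subsets of [n] = {set 'I_n}, ordered by inclusion. *)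
Definition exact_coloring (n k : nat) (c : {set 'I_n} -> 'I_k) : Prop :=
  forall i : 'I_k, exists W : {set 'I_n}, c W = i.

Definition rainbow_B2 (n k : nat) (c : {set 'I_n} -> 'I_k)
  (W1 W2 W3 W4 : {set 'I_n}) : Prop :=
  [/\ W1 \proper W2, W1 \proper W3, W2 \proper W4, W3 \proper W4
    & ~~ (W2 \subset W3) /\ ~~ (W3 \subset W2)] /\
  [/\ c W1 != c W2, c W1 != c W3 & c W1 != c W4] /\
  [/\ c W2 != c W3, c W2 != c W4 & c W3 != c W4].

Definition has_rainbow_B2 (n k : nat) (c : {set 'I_n} -> 'I_k) : Prop :=
  exists W1 W2 W3 W4, rainbow_B2 c W1 W2 W3 W4.

(* Main.v *)
Require Import Defs.
From mathcomp Require Import all_boot all_order all_algebra.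
From mathcomp Require Import zify.

Lemma bin_inc n m : m < n./2 -> 'C(n, m) <= 'C(n, m.+1).
Proof.
move=> h.
have h2 : m.+1 <= n - m by move: h; rewrite -!divn2; lia.
rewrite -(@leq_pmul2l m.+1) // mul_bin_left.
by rewrite leq_mul2r h2 orbT.
Qed.

Lemma bin_mid_ge n k : k <= n./2 -> 'C(n, k) <= 'C(n, n./2).
Proof.
move=> h.
have H : forall d, k + d <= n./2 -> 'C(n, k) <= 'C(n, k + d).
  elim=> [|d IH] hd; first by rewrite addn0.
  apply: leq_trans (IH _) _; first lia.
  rewrite addnS; apply: bin_inc; lia.
by have := H (n./2 - k); rewrite subnKC //; apply.
Qed.

Lemma bin_max n k : 'C(n, k) <= 'C(n, n./2).
Proof.
case: (leqP k n./2) => h; first exact: bin_mid_ge.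
case: (leqP k n) => hk; last by rewrite bin_small.
rewrite -bin_sub //; apply: bin_mid_ge.
move: h; rewrite -!divn2; lia.
Qed.

Lemma bin_mono m s : m <= s -> 'C(m, m./2) <= 'C(s, s./2).
Proof.
move=> h; rewrite -(subnKC h); elim: (s - m) => [|d IH]; first by rewrite addn0.
apply: leq_trans IH _; rewrite addnS.
apply: leq_trans (leq_bin2l _ (leqnSn _)) _; exact: bin_max.
Qed.

Lemma bin_le_mid a b s : a + b <= s -> 'C(a + b, a) <= 'C(s, s./2).
Proof. by move=> h; exact: (leq_trans (bin_max (a + b) a) (bin_mono _ _ h)). Qed.
Import Order.TTheory GRing.Theory Num.Theory.

Section Boll.
Local Open Scope ring_scope.

Lemma sum_single (I : finType) (P : {set I}) (w : I -> rat) i0 :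
  i0 \in P -> (forall j, j \in P -> j = i0) -> w i0 <= 1 ->
  \sum_(i in P) w i <= 1.
Proof.
move=> i0P h hw.
have -> : P = [set i0].
  by apply/setP => j; rewrite inE; apply/idP/eqP => [/h ->|->].
by rewrite big_set1.
Qed.

Lemma invbin_le1 (a b : nat) : (('C(a + b, a))%:R : rat)^-1 <= 1.
Proof.
rewrite invf_le1 ?ltr0n ?bin_gt0 ?leq_addr // ler1n bin_gt0 leq_addr //.
Qed.

Lemma bollobas (T I : finType) (m : nat) : forall (U : {set T}) (P : {set I})
  (A B : I -> {set T}),
  #|U| = m ->
  (forall i, i \in P -> [/\ A i \subset U, B i \subset U & A i :&: B i = set0]) ->
  (forall i j, i \in P -> j \in P -> i != j -> A i :&: B j != set0) ->
  \sum_(i in P) (('C(#|A i| + #|B i|, #|A i|))%:R : rat)^-1 <= 1.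
Proof.
elim: m => [|m IH] U P A B hU hP hX;
  (case: (set_0Vmem P) => [->|[i0 i0P]]; first by rewrite big_set0);
  (case: (boolP [exists i in P, (A i == set0) || (B i == set0)]) =>
     [/existsP [i /andP [iP /orP hi]] | /existsPn nd]).
- apply: (@sum_single _ _ (fun i => (('C(#|A i| + #|B i|, #|A i|))%:R : rat)^-1) i iP); last exact: invbin_le1.
  move=> j jP; apply/eqP/negPn/negP => ji.
  case: hi => /eqP hi.
  + by have := hX i j iP jP; rewrite eq_sym ji hi set0I eqxx => /(_ isT).
  + by have := hX j i jP iP ji; rewrite hi setI0 eqxx.
- exfalso; have := nd i0; rewrite i0P /=; case/norP => /negP []; apply/eqP.
  have [AU _ _] := hP i0 i0P.
  by apply/eqP; rewrite -subset0 -(cards0_eq hU).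
- apply: (@sum_single _ _ (fun i => (('C(#|A i| + #|B i|, #|A i|))%:R : rat)^-1) i iP); last exact: invbin_le1.
  move=> j jP; apply/eqP/negPn/negP => ji.
  case: hi => /eqP hi.
  + by have := hX i j iP jP; rewrite eq_sym ji hi set0I eqxx => /(_ isT).
  + by have := hX j i jP iP ji; rewrite hi setI0 eqxx.
- have hAB : forall i, i \in P -> A i != set0 /\ B i != set0.
    by move=> i iP; have := nd i; rewrite iP /= negb_or => /andP.
  pose w i := (('C(#|A i| + #|B i|, #|A i|))%:R : rat)^-1.
  pose v x i := (('C(#|A i| + #|B i :\ x|, #|A i|))%:R : rat)^-1.
  have Hx : forall x, x \in U ->
      \sum_(i in P | x \notin A i) v x i <= 1.
    move=> x xU.
    rewrite (eq_bigl (fun i => i \in [set i in P | x \notin A i])); last first.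
      by move=> i; rewrite inE.
    apply: (IH (U :\ x) _ A (fun i => B i :\ x)).
    + by move: hU; rewrite (cardsD1 x) xU => -[].
    + move=> i; rewrite inE => /andP [iP xA].
      have [AU BU hd] := hP i iP.
      split; first by rewrite subsetD1 AU.
      * by apply: setSD.
      * apply/eqP; rewrite -subset0 -hd; apply: setIS; exact: subsetDl.
    + move=> i j; rewrite !inE => /andP [iP xA] /andP [jP _] ij.
      have /set0Pn [y] := hX i j iP jP ij.
      rewrite inE => /andP [yA yB].
      apply/set0Pn; exists y; rewrite !inE yA yB andbT.
      by apply: contraNneq xA => <-.
  have S1 : \sum_(x in U) \sum_(i in P | x \notin A i) v x i <= #|U|%:R.
    apply: le_trans (ler_sum _ Hx) _.
    by rewrite sumr_const.
  have S2 : \sum_(x in U) \sum_(i in P | x \notin A i) v x i =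
            \sum_(i in P) (m.+1)%:R * w i.
    rewrite (exchange_big_dep (fun i => i \in P)) /=; last by move=> ? ? _ /andP [].
    apply: eq_bigr => i iP.
    have [AU BU hd] := hP i iP.
    have [An Bn] := hAB i iP.
    rewrite (eq_bigl (fun x => x \in U :\: A i)); last first.
      by move=> x; rewrite inE iP andbC.
    rewrite (big_setID (B i)) /=.
    have e1 : (U :\: A i) :&: B i = B i.
      apply/setIidPr/subsetP => y yB.
      rewrite inE (subsetP BU) // andbT.
      apply/negP => yA.
      have : y \in A i :&: B i by rewrite inE yA yB.
      by rewrite hd inE.
    rewrite e1.
    rewrite (eq_bigr (fun _ => (('C(#|A i| + (#|B i|).-1, #|A i|))%:R : rat)^-1)); last first.
      by move=> x xB; rewrite (cardsD1 x (B i)) xB.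
    rewrite [X in _ + X](eq_bigr (fun _ => w i)); last first.
      move=> x; rewrite inE => /andP [xB _].
      by rewrite /w (cardsD1 x (B i)) (negbTE xB).
    rewrite !sumr_const.
    have c1 := cardsID (B i) (U :\: A i).
    have c2 := cardsID (A i) U.
    have e2 : U :&: A i = A i by apply/setIidPr.
    rewrite e1 in c1; rewrite e2 hU in c2.
    move: (#|(U :\: A i) :\: B i|) c1 => r c1.
    have a0 : (0 < #|A i|)%N by rewrite card_gt0.
    have b0 : (0 < #|B i|)%N by rewrite card_gt0.
    rewrite /w.
    move: (#|A i|) (#|B i|) a0 b0 c1 c2 => a [//|b] _ _ c1 c2.
    have key : (b.+1 * 'C(a + b.+1, a) = (a + b.+1) * 'C(a + b, a))%N.
      by have := mul_bin_down (a + b.+1) a; rewrite addnS /= -addnS addKn.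
    have C1 : (('C(a + b, a))%:R : rat) != 0 by rewrite pnatr_eq0 -lt0n bin_gt0 leq_addr.
    have C2 : (('C(a + b.+1, a))%:R : rat) != 0 by rewrite pnatr_eq0 -lt0n bin_gt0 leq_addr.
    have k2 : (b.+1)%:R * ('C(a + b, a)%:R : rat)^-1 = (a + b.+1)%:R * ('C(a + b.+1, a)%:R)^-1.
      apply/eqP; rewrite eqr_div // -!natrM key mulnC //.
    rewrite -(mulr_natl _ b.+1) -(mulr_natl _ r) k2 -mulrDl -natrD.
    congr (_ * _); congr (_%:R); lia.
  move: S1; rewrite S2 -mulr_sumr hU.
  by rewrite -{2}(mulr1 (m.+1)%:R) ler_pM2l // ltr0n.
Qed.


Lemma bollobas_card (T I : finType) (P : {set I}) (A B : I -> {set T}) (s : nat) :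
  (forall i, i \in P -> A i :&: B i = set0 /\ (#|A i| + #|B i| <= s)%N) ->
  (forall i j, i \in P -> j \in P -> i != j -> A i :&: B j != set0) ->
  (#|P| <= 'C(s, s./2))%N.
Proof.
move=> hP hX.
have H := @bollobas T I #|[set: T]| setT P A B erefl.
have {H} H : \sum_(i in P) (('C(#|A i| + #|B i|, #|A i|))%:R : rat)^-1 <= 1.
  apply: H hX => i iP; have [h _] := hP i iP; split => //; exact: subsetT.
have Cpos : (0 < 'C(s, s./2))%N by rewrite bin_gt0 -divn2; lia.
have H2 : \sum_(i in P) (('C(s, s./2))%:R : rat)^-1 <= 1.
  apply: le_trans H; apply: ler_sum => i iP.
  have [_ hs] := hP i iP.
  have hs2 : (s./2 <= s)%N by rewrite -divn2; lia.
  rewrite lef_pV2 ?posrE ?ltr0n ?bin_gt0 ?leq_addr ?hs2 //.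
  rewrite Num.Theory.ler_nat; exact: bin_le_mid.
move: H2; rewrite sumr_const -(mulr_natl _ #|P|).
by rewrite ler_pdivrMr ?ltr0n // mul1r Num.Theory.ler_nat.
Qed.
End Boll.

Lemma chain4 {T : finType} {X1 X2 X3 X4 : {set T}} :
  X1 \proper X2 -> X2 \proper X3 -> X3 \proper X4 ->
  [/\ X1 \proper X1 :|: (X4 :\: X3), X1 :|: (X4 :\: X3) \proper X4,
      ~~ (X1 :|: (X4 :\: X3) \subset X2), ~~ (X2 \subset X1 :|: (X4 :\: X3))
      & ~~ (X1 :|: (X4 :\: X3) \subset X3) /\ ~~ (X3 \subset X1 :|: (X4 :\: X3))].
Proof.
move=> /properP [s12 [z z2 z1]] /properP [s23 _] /properP [s34 [y y4 y3]].
have s13 := subset_trans s12 s23.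
have s14 := subset_trans s13 s34.
have yW : y \in X1 :|: (X4 :\: X3) by rewrite !inE y4 y3 orbT.
have zW : z \notin X1 :|: (X4 :\: X3).
  by rewrite !inE negb_or z1 /= negb_and negbK (subsetP s23 z z2).
have y2 : y \notin X2 by apply: contra y3; apply: (subsetP s23).
have z3 : z \in X3 by apply: (subsetP s23).
have z4 : z \in X4 by apply: (subsetP s34).
split.
- apply/properP; split; first exact: subsetUl.
  by exists y => //; apply: contra y3; apply: (subsetP s13).
- apply/properP; split; last by exists z.
  by rewrite subUset s14 subsetDl.
- by apply/subsetPn; exists y.
- by apply/subsetPn; exists z.
- by split; [apply/subsetPn; exists y | apply/subsetPn; exists z].
Qed.

Theorem proposition2p14 (n k : nat) (c : {set 'I_n} -> 'I_k) :
  2 < n -> 4 <= k ->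
  exact_coloring c -> ~ has_rainbow_B2 c ->
  k <= 'C(n, n./2) + 'C(n.-1, n.-1./2) + 'C(n.-2, n.-2./2) + 1.
Proof.
move=> n2 k4 hc hnr.
pose r (i : 'I_k) : {set 'I_n} := odflt set0 [pick W | c W == i].
have cr : forall i, c (r i) = i.
  move=> i; rewrite /r; case: pickP => [W /eqP //|h].
  by have [W hW] := hc i; move: (h W); rewrite hW eqxx.
have rinj : injective r by move=> i j e; rewrite -(cr i) -(cr j) e.
have RB : forall W1 W2 W3 W4 : {set 'I_n}, W1 \proper W2 -> W1 \proper W3 ->
    W2 \proper W4 -> W3 \proper W4 -> ~~ (W2 \subset W3) -> ~~ (W3 \subset W2) ->
    c W1 != c W2 -> c W1 != c W3 -> c W1 != c W4 ->
    c W2 != c W3 -> c W2 != c W4 -> c W3 != c W4 -> False.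
  move=> W1 W2 W3 W4 h12 h13 h24 h34 i23 i32 d12 d13 d14 d23 d24 d34.
  by apply: hnr; exists W1, W2, W3, W4; split; [|split]; split.
have cT : #|[set: 'I_n]| = n by rewrite cardsT card_ord.
have pn : forall i j, r i \proper r j -> i != j.
  by move=> i j h; apply/eqP => e; move: h; rewrite e properxx.
have nmid : n <= 'C(n, n./2) by have := bin_max n 1; rewrite bin1.
case: (eqVneq (c set0) (c setT)) => [ea|ne].
- pose O := [set~ c set0].
  have inO : forall i, (i \in O) = (i != c set0) by move=> i; rewrite in_setC1.
  have cO : #|O| = k.-1 by rewrite cardsC1 card_ord.
  clearbody O.
  have inO' : forall i, i \in O -> (i != c set0) && (i != c setT).
    by move=> i; rewrite inO -ea => ->.
  have r0 : forall i, i \in O -> r i != set0.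
    move=> i; rewrite inO => h; apply: contra h => /eqP <-.
    by rewrite cr.
  have rT : forall i, i \in O -> r i != setT.
    move=> i; rewrite inO ea => h; apply: contra h => /eqP <-.
    by rewrite cr.
  have sub_eq : forall X Y : {set 'I_n}, (X :&: ~: Y == set0) = (X \subset Y).
    by move=> X Y; rewrite setI_eq0 disjoints_subset setCK.
  have cross : forall b i j, b \in O -> i \in O -> j \in O ->
      r b \proper r i -> r b \subset r j -> ~~ (r i \subset r j) ->
      ~~ (r j \subset r i) -> False.
    move=> b i j bO iO jO pbi sbj nij nji.
    have rbj : r b \proper r j.
      rewrite properEneq sbj andbT; apply/eqP => e.
      by move: nji; rewrite -e (proper_sub pbi).
    move: (inO' b bO) (inO' i iO) (inO' j jO) => /andP [b0 bT] /andP [i0 iT] /andP [j0 jT].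
    apply: (RB (r b) (r i) (r j) setT) => //; rewrite ?properT ?rT ?cr //.
    + exact: pn.
    + exact: pn.
    + apply: contra nij => /eqP ->; exact: subxx.
  have no4 : forall i1 i2 i3 i4, i1 \in O -> i2 \in O -> i3 \in O -> i4 \in O ->
      r i1 \proper r i2 -> r i2 \proper r i3 -> r i3 \proper r i4 -> False.
    move=> i1 i2 i3 i4 i1O i2O i3O i4O h12 h23 h34.
    have [p1W pW4 iW2 i2W [iW3 i3W]] := chain4 h12 h23 h34.
    move: (r i1 :|: (r i4 :\: r i3)) p1W pW4 iW2 i2W iW3 i3W => W p1W pW4 iW2 i2W iW3 i3W.
    have h13 := proper_trans h12 h23.
    have h24 := proper_trans h23 h34.
    have h14 := proper_trans h13 h34.
    have d12 := pn _ _ h12; have d23 := pn _ _ h23; have d34 := pn _ _ h34.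
    have d13 := pn _ _ h13; have d24 := pn _ _ h24; have d14 := pn _ _ h14.
    move: (inO' _ i1O) (inO' _ i2O) (inO' _ i3O) (inO' _ i4O) =>
      /andP [a1 b1] /andP [a2 b2] /andP [a3 b3] /andP [a4 b4].
    case: (eqVneq (c W) i1) => [w1|w1].
      apply: (RB set0 (r i2) W (r i4)); rewrite ?cr ?w1 ?proper0 ?r0 //;
        try (by rewrite eq_sym).
      by rewrite -proper0; exact: (sub_proper_trans (sub0set _) p1W).
    case: (eqVneq (c W) i4) => [w4|w4].
      apply: (RB (r i1) (r i2) W setT); rewrite ?cr ?w4 ?properT ?rT //;
        try (by rewrite eq_sym).
      by rewrite -properT; exact: (proper_sub_trans pW4 (subsetT _)).
    case: (eqVneq (c W) i2) => [w2|w2].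
      apply: (RB (r i1) (r i3) W (r i4)); rewrite ?cr ?w2 //;
        try (by rewrite eq_sym).
    apply: (RB (r i1) (r i2) W (r i4)); rewrite ?cr //;
      try (by rewrite eq_sym).
  pose below i := [exists j, (j \in O) && (r j \proper r i)].
  pose below2 i := [exists j, (j \in O) &&
     [exists l, [&& l \in O, r j \proper r l & r l \proper r i]]].
  pose bot2 i := odflt i [pick j | (j \in O) && (r j \proper r i)].
  pose bot3 i := odflt i [pick j | (j \in O) &&
     [exists l, [&& l \in O, r j \proper r l & r l \proper r i]]].
  have bot2P : forall i, below i -> (bot2 i \in O) && (r (bot2 i) \proper r i).
    move=> i /existsP [j hj]; rewrite /bot2; case: pickP => [j' //| h].
    by rewrite h in hj.
  have bot3P : forall i, below2 i -> (bot3 i \in O) &&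
      [exists l, [&& l \in O, r (bot3 i) \proper r l & r l \proper r i]].
    move=> i /existsP [j hj]; rewrite /bot3; case: pickP => [j' //| h].
    by rewrite h in hj.
  pose C1 := [set i in O | ~~ below i].
  pose C2 := [set i in O | below i && ~~ below2 i].
  pose C3 := [set i in O | below2 i].
  have cU : forall A B : {set 'I_k}, #|A :|: B| <= #|A| + #|B|.
    by move=> A B; rewrite cardsU leq_subr.
  have cov : #|O| <= #|C1| + #|C2| + #|C3|.
    apply: leq_trans (_ : #|C1 :|: C2 :|: C3| <= _).
      apply: subset_leq_card; apply/subsetP => i iO; rewrite !inE iO /=.
      by case: (below i); case: (below2 i).
    apply: leq_trans (cU _ _) _; rewrite leq_add2r; exact: cU.
  have b1 : #|C1| <= 'C(n, n./2).
    apply: (@bollobas_card _ _ C1 r (fun i => ~: r i)).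
      move=> i _; split; first by apply/eqP; rewrite sub_eq.
      by rewrite cardsC card_ord.
    move=> i j; rewrite !inE => /andP [iO _] /andP [jO nj] ij.
    rewrite sub_eq; apply/negP => sij.
    move/negP: nj; apply; apply/existsP; exists i; rewrite iO properEneq sij andbT.
    by apply: contra ij => /eqP /rinj ->.
  have b2 : #|C2| <= 'C(n.-1, n.-1./2).
    apply: (@bollobas_card _ _ C2 (fun i => r (bot2 i)) (fun i => ~: r i)).
      move=> i; rewrite inE => /andP [iO /andP [bi _]].
      have /andP [bO pb] := bot2P i bi.
      split; first by apply/eqP; rewrite sub_eq (proper_sub pb).
      have := proper_card pb; have := cardsC (r i); rewrite card_ord; lia.
    move=> i j; rewrite !inE => /andP [iO /andP [bi nbi]] /andP [jO /andP [bj nbj]] ij.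
    have /andP [biO pbi] := bot2P i bi.
    have /andP [bjO pbj] := bot2P j bj.
    rewrite sub_eq; apply/negP => sij.
    apply: (cross (bot2 i) i j) => //.
    + apply/negP => h; move/negP: nbj; apply; apply/existsP; exists (bot2 i).
      rewrite biO; apply/existsP; exists i; rewrite iO pbi /= properEneq h andbT.
      by apply: contra ij => /eqP /rinj ->.
    + apply/negP => h; move/negP: nbi; apply; apply/existsP; exists (bot2 j).
      rewrite bjO; apply/existsP; exists j; rewrite jO pbj /= properEneq h andbT.
      by apply: contra ij => /eqP /rinj ->.
  have b3 : #|C3| <= 'C(n.-2, n.-2./2).
    apply: (@bollobas_card _ _ C3 (fun i => r (bot3 i)) (fun i => ~: r i)).
      move=> i; rewrite inE => /andP [iO bi].
      have /andP [bO /existsP [l /and3P [lO pbl pli]]] := bot3P i bi.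
      split; first by apply/eqP; rewrite sub_eq (proper_sub (proper_trans pbl pli)).
      have := proper_card pbl; have := proper_card pli.
      have := cardsC (r i); rewrite card_ord; lia.
    move=> i j; rewrite !inE => /andP [iO bi] /andP [jO bj] ij.
    have /andP [biO /existsP [l /and3P [lO pbl pli]]] := bot3P i bi.
    have /andP [bjO /existsP [l' /and3P [lO' pbl' pli']]] := bot3P j bj.
    rewrite sub_eq; apply/negP => sij.
    apply: (cross (bot3 i) i j) => //.
    + exact: proper_trans pbl pli.
    + apply/negP => h; apply: (no4 (bot3 i) l i j) => //.
      rewrite properEneq h andbT.
      by apply: contra ij => /eqP /rinj ->.
    + apply/negP => h; apply: (no4 (bot3 j) l' j i) => //.
      rewrite properEneq h andbT.
      by apply: contra ij => /eqP /rinj ->.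
  lia.
- pose O := [set i | (i != c set0) && (i != c setT)].
  have r0 : forall i, i \in O -> r i != set0.
    move=> i; rewrite inE => /andP [h _]; apply: contra h => /eqP <-.
    by rewrite cr.
  have rT : forall i, i \in O -> r i != setT.
    move=> i; rewrite inE => /andP [_ h]; apply: contra h => /eqP <-.
    by rewrite cr.
  have sz : forall i, i \in O -> 0 < #|r i| < n.
    move=> i iO; rewrite card_gt0 r0 //=.
    have := @proper_card _ (r i) [set: 'I_n]; rewrite cT; apply.
    by rewrite properT rT.
  have szinj : {in O &, injective (fun i => #|r i|)}.
    move=> i j iO jO e; apply/eqP/negPn/negP => ij.
    have rij : r i != r j by apply: contra ij => /eqP /rinj ->.
    case: (boolP (r i \subset r j)) => hij.
      have : r i \proper r j by rewrite properEneq rij.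
      by move/proper_card; rewrite e ltnn.
    case: (boolP (r j \subset r i)) => hji.
      have : r j \proper r i by rewrite properEneq eq_sym rij.
      by move/proper_card; rewrite e ltnn.
    move: iO jO; rewrite !inE => /andP [i0 iT] /andP [j0 jT].
    apply: (RB set0 (r i) (r j) setT) => //; rewrite ?proper0 ?properT ?r0 ?rT ?cr //;
      try (by rewrite inE i0 iT); try (by rewrite inE j0 jT).
    + by rewrite eq_sym.
    + by rewrite eq_sym.
  have cO : #|O| <= n.-1.
    rewrite cardE -(size_map (fun i => #|r i|)).
    have -> : n.-1 = size (iota 1 n.-1) by rewrite size_iota.
    apply: uniq_leq_size.
      by rewrite map_inj_in_uniq ?enum_uniq // => i j; rewrite !mem_enum; apply: szinj.
    move=> x /mapP [i]; rewrite mem_enum => iO ->.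
    by rewrite mem_iota; have := sz i iO; lia.
  have cC : #|~: O| <= 2.
    apply: leq_trans (_ : #|[set c set0; c setT]| <= 2).
      apply: subset_leq_card; apply/subsetP => i; rewrite !inE negb_and !negbK.
      by [].
    by rewrite cards2; case: (_ != _).
  have := cardsC O; rewrite card_ord => <-.
  lia.
Qed.
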